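(* Let $n\ge 1$, let $\omega\in(\mathbb{Z}/n\mathbb{Z})^\times$ (represented by an integer), let $r\in\mathbb{Z}/n\mathbb{Z}$, and let $X=\langle\omega\rangle r$. Put $k=\gcd\left(\omega-1,\frac{n}{\gcd(r,n)}\right)$. Then $\sigma_X$ has $k$-fold dihedral symmetry: its image $\{\sigma_X(y):y\in\mathbb{Z}/n\mathbb{Z}\}$ is invariant under complex conjugation and under rotation by $2\pi/k$ about the origin.
   Context: Write $e(\theta)=\exp(2\pi i\theta)$. For a subgroup $A$ of $(\mathbb{Z}/n\mathbb{Z})^\times$ and $r\in\mathbb{Z}/n\mathbb{Z}$, let $X=Ar=\{ar:a\in A\}$ and $\sigma_X(y)=\sum_{x\in X}e\left(\frac{xy}{n}\right)$ for $y\in\mathbb{Z}/n\mathbb{Z}$. $\langle\omega\rangle$ is the cyclic subgroup generated by $\omega$. A function is said to have $k$-fold dihedral symmetry if its image is invariant under the natural action of the dihedral group of order $2k$, i.e. under complex conjugation and rotation by $2\pi/k$ about $0$. *)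

(* Defs.v *)
From HB Require Import structures.
From mathcomp Require Import all_boot all_order all_algebra all_field.
Unset Printing Implicit Defensive.
Import Order.TTheory GRing.Theory Num.Theory.
Local Open Scope ring_scope.

(* zeta n = exp(2 pi i / n).  n.-root (-1) is the n-th root of -1 with minimal
   non-negative argument, i.e. exp(i pi / n) for n > 1 (and -1 for n = 1);
   its square is exp(2 pi i / n) (and 1 for n = 1). *)
Definition zeta (n : nat) : algC := (n.-root (-1)) ^+ 2.

(* e(m / n) for m a natural number *)
Definition en (n m : nat) : algC := zeta n ^+ m.

(* X = <omega> r as a subset of Z/nZ (residues represented by 'I_n).
   The subgroup <omega> of (Z/nZ)^x is {omega^j mod n : j in N}; since the
   multiplicative order of omega mod n is at most totient n <= n, exponents
   j < n already give every element. *)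
Definition orbitX (n omega r : nat) : {set 'I_n} :=
  [set x : 'I_n | [exists j : 'I_n, nat_of_ord x == (omega ^ j * r) %% n]%N].

Definition sigmaX (n omega r : nat) (y : 'I_n) : algC :=
  \sum_(x in orbitX n omega r) en n (x * y)%N.

Definition in_image_sigmaX (n omega r : nat) (z : algC) : Prop :=
  exists y : 'I_n, sigmaX n omega r y = z.

Definition dihedral_symmetric (S : algC -> Prop) (k : nat) : Prop :=
  (forall z, S (z^*) <-> S z) /\
  (forall z, S (zeta k * z) <-> S z).

(* Main.v *)
Set Warnings "-notation-overridden,-ambiguous-paths,-notation-incompatible-prefix".
Require Import Defs.
From HB Require Import structures.
From mathcomp Require Import all_boot all_order all_algebra all_field.
From mathcomp Require Import ring zify.
Import Order.TTheory GRing.Theory Num.Theory.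
Local Open Scope ring_scope.
Lemma sum_unity (u : algC) e : u ^+ e = 1 -> u != 1 -> \sum_(i < e) u ^+ i = 0.
Proof.
move=> ue u1; have := subrX1 u e; rewrite ue subrr => /esym/eqP.
by rewrite mulf_eq0 subr_eq0 (negbTE u1) /= => /eqP.
Qed.

Lemma norm1_conj (w : algC) : `|w| = 1 -> w * w^* = 1.
Proof. by move=> h; rewrite -normCK h expr1n. Qed.

Lemma prim_norm1 e (om : algC) : e.-primitive_root om -> `|om| = 1.
Proof.
move=> pom; have e0 := prim_order_gt0 pom.
apply/eqP; rewrite -(pexpr_eq1 e0) ?normr_ge0 // -normrX prim_expr_order // normr1.
by [].
Qed.

Arguments prim_norm1 {e om}.
Arguments norm1_conj {w}.
Lemma parseval_inner e (om z0 : algC) (j l : 'I_e) :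
  e.-primitive_root om -> `|z0| = 1 ->
  \sum_(i < e) (z0 * om ^+ i) ^+ j * ((z0 * om ^+ i) ^+ l)^* =
  if j == l then e%:R else 0.
Proof.
move=> pom nz0; have hom := norm1_conj (prim_norm1 pom); have zz := norm1_conj nz0.
have e0 := prim_order_gt0 pom.
have H : forall i : nat, (z0 * om ^+ i) ^+ j * ((z0 * om ^+ i) ^+ l)^* =
   (z0 ^+ j * z0^* ^+ l) * (om ^+ j * om^* ^+ l) ^+ i.
  move=> i; rewrite !rmorphXn rmorphM rmorphXn !exprMn.
  rewrite [(om ^+ i) ^+ j]exprAC [(om^* ^+ i) ^+ l]exprAC.
  by rewrite mulrACA.
under eq_bigr => i _ do rewrite H.
case: eqP => [->|/eqP jl].
  rewrite -!exprMn zz hom !expr1n.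
  under eq_bigr do rewrite expr1n mul1r.
  by rewrite sumr_const card_ord.
rewrite -mulr_sumr sum_unity ?mulr0 //.
  have oe : om ^+ e = 1 := prim_expr_order pom.
  rewrite exprMn -!exprM mulnC exprM oe expr1n mul1r.
  by rewrite mulnC exprM -rmorphXn oe rmorph1 expr1n.
apply: contra jl => /eqP u1.
have : om ^+ j = om ^+ l.
  by rewrite -[om ^+ j]mulr1 -(expr1n _ l) -hom exprMn [om ^+ l * _]mulrC mulrA u1 mul1r.
move/eqP; rewrite (eq_prim_root_expr pom) !modn_small //.
Qed.

Lemma parseval e (om z0 : algC) : e.-primitive_root om -> `|z0| = 1 ->
  \sum_(i < e) `|\sum_(j < e) (z0 * om ^+ i) ^+ j| ^+ 2 = (e * e)%:R.
Proof.
move=> pom nz0.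
under eq_bigr => i _ do rewrite normCK rmorph_sum mulr_suml.
under eq_bigr => i _ do under eq_bigr => j _ do rewrite mulr_sumr.
rewrite exchange_big /=.
under eq_bigr => j _ do rewrite exchange_big /=.
have E : forall j l : 'I_e, \sum_(i < e) (z0 * om ^+ i) ^+ j * ((z0 * om ^+ i) ^+ l)^* =
  if j == l then e%:R else 0 by move=> j l; apply: parseval_inner.
under eq_bigr => j _ do under eq_bigr => l _ do rewrite E.
have F : forall j : 'I_e, \sum_(l < e) (if j == l then e%:R else 0 : algC) = e%:R.
  move=> j; rewrite (bigD1 j) //= eqxx big1 ?addr0 //.
  by move=> l /negbTE; rewrite eq_sym => ->.
under eq_bigr => j _ do rewrite F.
by rewrite sumr_const card_ord natrM mulr_natl.
Qed.

Lemma exists_big e (om z0 : algC) : (1 < e)%N -> e.-primitive_root om -> `|z0| = 1 ->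
  exists i : 'I_e, 1 < `|\sum_(j < e) (z0 * om ^+ i) ^+ j| ^+ 2.
Proof.
move=> e1 pom nz0.
case: (boolP [exists i : 'I_e, 1 < `|\sum_(j < e) (z0 * om ^+ i) ^+ j| ^+ 2]).
  by move/existsP.
move/existsPn => H; exfalso.
have : \sum_(i < e) `|\sum_(j < e) (z0 * om ^+ i) ^+ j| ^+ 2 <= \sum_(i < e) (1 : algC).
  apply: ler_sum => i _; have := H i.
  by rewrite real_leNgt ?rpred1 ?rpredX ?normr_real.
rewrite parseval // sumr_const card_ord -[_ *+ e]mulr_natl mulr1 ler_nat.
have : (e * 2 <= e * e)%N by rewrite leq_mul2l e1 orbT.
by lia.
Qed.

Lemma normsub1 (w : algC) : `|w| = 1 -> `|w - 1| ^+ 2 = 2 - 2 * 'Re w.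
Proof.
move=> nw; have ww := norm1_conj nw.
rewrite normCK rmorphB rmorph1 ReE.
have -> : (w-1)*(w^*-1) = w*w^* - w - w^* + 1 by ring.
rewrite ww; field.
by [].
Qed.

Lemma yprim n : (0 < n)%N -> (2 * n)%N.-primitive_root (n.-root (-1) : algC).
Proof.
move=> n0; set y := n.-root (-1 : algC).
have yn : y ^+ n = -1 by rewrite rootCK.
have N11 : (-1 : algC) != 1 by rewrite lt_eqF // (lt_trans (ltrN10 _) ltr01).
have n1w : forall w : algC, w ^+ n = -1 -> `|w| = 1.
  move=> w wn; apply/eqP; rewrite -(pexpr_eq1 n0) ?normr_ge0 // -normrX wn normrN1.
  by [].
have ymax : forall z : algC, z ^+ n = -1 -> 'Re z <= 'Re y.
  move=> z zn; have [h|h] := boolP (0 <= 'Im z).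
    exact: rootC_Re_max.
  rewrite -Re_conj; apply: rootC_Re_max => //.
    by rewrite -rmorphXn zn rmorphN1.
  rewrite Im_conj oppr_ge0; move: h.
  rewrite real_leNgt ?Creal_Im ?rpred0 //.
  by apply: contra => /ltW.
have y2n : y ^+ (2 * n) = 1 by rewrite mulnC exprM yn sqrrN expr1n.
have [m pm md] := prim_order_exists (ltac:(lia) : (0 < 2 * n)%N) y2n.
case: (eqVneq m (2 * n)%N) => [mE|mne]; first by rewrite -mE.
exfalso.
have m0 := prim_order_gt0 pm.
set e := ((2 * n) %/ m)%N.
have me : (2 * n = e * m)%N by rewrite divnK.
have mn : ~~ (m %| n)%N by rewrite (prim_order_dvd pm) yn.
have eodd : odd e.
  apply/negP => /negP; rewrite -dvdn2 => /dvdnP [f ef].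
  move: mn; rewrite ef in me; have -> : n = (f * m)%N by lia.
  by rewrite dvdn_mull.
have modd : ~~ odd m.
  by apply/negP => om; move: (congr1 odd me); rewrite !oddM eodd om.
have [h mh] : exists h, m = (h * 2)%N.
  by exists (m %/ 2)%N; rewrite divnK // dvdn2.
have neh : n = (e * h)%N by lia.
have e1 : (1 < e)%N.
  have : e != 0%N by apply/eqP => e0; lia.
  have : e != 1%N by apply/eqP => e0; apply/eqP: mne; lia.
  lia.
have yh : y ^+ h = -1.
  have : (y ^+ h) ^+ 2 == 1 by rewrite -exprM -mh prim_expr_order.
  rewrite sqrf_eq1 => /orP [|/eqP //].
  by rewrite -(prim_order_dvd pm) gtnNdvd //; lia.
have [om pom] := C_prim_root_exists (ltnW e1).
set z0 := e.-root y.
have z0e : z0 ^+ e = y by rewrite rootCK //; lia.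
have nz0 : `|z0| = 1.
  apply/eqP; rewrite -(pexpr_eq1 (ltnW e1)) ?normr_ge0 // -normrX z0e.
  by rewrite (n1w _ yn).
have [i Hi] := exists_big _ _ _ e1 pom nz0.
set z := z0 * om ^+ i.
have ze : z ^+ e = y.
  by rewrite exprMn exprAC (prim_expr_order pom) expr1n mulr1.
have zn : z ^+ n = -1 by rewrite neh exprM ze yh.
have key : y - 1 = (z - 1) * \sum_(j < e) z ^+ j by rewrite -ze subrX1.
have z1 : z - 1 != 0.
  rewrite subr_eq0; apply/eqP => z1; move: yn; rewrite -ze z1 !expr1n => /eqP.
  by rewrite eq_sym (negbTE N11).
have lt : `|z - 1| ^+ 2 < `|y - 1| ^+ 2.
  rewrite key normrM exprMn ltr_pMr //.
  by rewrite exprn_gt0 // normr_gt0.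
move: lt; rewrite !normsub1 ?(n1w _ yn) ?(n1w _ zn) //.
rewrite ltrD2l ltrN2 ltr_pM2l ?ltr0n // => lt.
by have := ymax z zn; rewrite real_leNgt ?Creal_Re // lt.
Qed.
Lemma zeta_prim n : (0 < n)%N -> n.-primitive_root (zeta n).
Proof.
move=> n0; have := exp_prim_root (@yprim n n0) 2.
by rewrite gcdnMr mulKn.
Qed.

Lemma conj_zeta_pow n m : (0 < n)%N -> (zeta n ^+ m)^* = zeta n ^+ (m * (n - 1)).
Proof.
move=> n0; have pz := @zeta_prim n n0; have z1 := prim_expr_order pz.
have nz : `|zeta n| = 1.
  apply/eqP; rewrite -(pexpr_eq1 n0) ?normr_ge0 // -normrX z1 normr1 //.
have zz : zeta n * (zeta n)^* = 1 by rewrite -normCK nz expr1n.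
have zc : (zeta n)^* = zeta n ^+ (n - 1).
  have zn0 : zeta n != 0 by apply/eqP => h; move: z1; rewrite h expr0n gtn_eqF // => /eqP; rewrite eq_sym oner_eq0.
  apply: (mulfI zn0); rewrite zz -exprS; have -> : (n - 1).+1 = n by lia.
  by rewrite z1.
have -> : (zeta n ^+ m)^* = ((zeta n)^*) ^+ m by rewrite rmorphXn.
by rewrite zc -exprM mulnC.
Qed.

Lemma rot (n omega r : nat) (y : 'I_n) : (0 < n)%N -> coprime omega n ->
  exists y' : 'I_n, sigmaX n omega r y' =
     zeta (gcdn (omega - 1) (n %/ gcdn r n)) * sigmaX n omega r y.
Proof.
move=> n0 cop.
set g := gcdn r n.
have g0 : (0 < g)%N by rewrite gcdn_gt0 n0 orbT.
set n' := (n %/ g)%N; set r' := (r %/ g)%N.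
have hn : n = (n' * g)%N by rewrite divnK ?dvdn_gcdr.
have hr : r = (r' * g)%N by rewrite divnK ?dvdn_gcdl.
have n'0 : (0 < n')%N by move: n0; rewrite hn muln_gt0 => /andP[].
set k := gcdn (omega - 1) n'.
have k0 : (0 < k)%N by rewrite gcdn_gt0 n'0 orbT.
have kn' : (k %| n')%N by rewrite dvdn_gcdr.
have kw : (k %| omega - 1)%N by rewrite dvdn_gcdl.
set a := (n' %/ k)%N.
have hn' : n' = (a * k)%N by rewrite divnK.
have cop' : coprime r' n'.
  have : (gcdn r' n' * g = g)%N by rewrite muln_gcdl -hr -hn.
  rewrite /coprime; move=> h; apply/eqP.
  by apply/eqP; rewrite -(eqn_pmul2r g0) mul1n h.
have eu := cyclic.Euler_exp_totient cop'.
set s := (r' ^ (totient n').-1)%N.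
have hs : ((r' * s) %% n' = 1 %% n')%N.
  by rewrite /s -expnS prednK ?totient_gt0.
set zn := zeta n; have pzn := @zeta_prim n n0; have zn1 : zn ^+ n = 1 := prim_expr_order pzn.
have nk : (k %| n)%N by rewrite hn hn' mulnAC dvdn_mull.
set W := zn ^+ (n %/ k).
have pW : k.-primitive_root W := dvdn_prim_root pzn nk.
have zk1 : zeta k ^+ k = 1 := prim_expr_order (@zeta_prim k k0).
have [i Hi] := prim_rootP pW zk1.
have nkd : (n %/ k = a * g)%N by rewrite hn hn' mulnAC mulnK.
set t := (i * s * a)%N.
have ho : (omega %% k = 1 %% k)%N.
  have [w0|wpos] := posnP omega.
    move: cop; rewrite w0 /coprime gcd0n => /eqP n1.
    move: nk; rewrite n1 dvdn1 => /eqP ->.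
    by rewrite !modn1.
  by apply/eqP; rewrite eqn_mod_dvd.
have hrs : ((r' * s) %% k = 1 %% k)%N.
  by rewrite -(modn_dvdm (r' * s) kn') hs (modn_dvdm 1 kn').
exists (Ordinal (ltn_pmod (y + t) n0)).
rewrite /sigmaX mulr_sumr; apply: eq_bigr => x.
rewrite inE => /existsP [j /eqP xE].
rewrite /en /=.
rewrite -[LHS](expr_mod _ zn1) modnMmr (expr_mod _ zn1) mulnDr exprD mulrC.
congr (_ * _).
rewrite xE -(expr_mod _ zn1) modnMml (expr_mod _ zn1).
have -> : (omega ^ j * r * t = (omega ^ j * (r' * s) * i) * (n %/ k))%N.
  by rewrite nkd hr /t; ring.
rewrite mulnC exprM -/W -(expr_mod _ (prim_expr_order pW)).
have -> : ((omega ^ j * (r' * s) * i) %% k = i)%N.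
  have e1 : ((omega ^ j * (r' * s)) %% k = 1 %% k)%N.
    by rewrite -modnMm -modnXm ho hrs modnXm exp1n modnMm muln1.
  by rewrite -modnMml e1 modnMml mul1n modn_small.
by rewrite Hi.
Qed.

Local Close Scope ring_scope.

Theorem proposition3p1 (n omega r : nat) :
  (1 <= n)%N -> coprime omega n ->
  dihedral_symmetric (in_image_sigmaX n omega r)
    (gcdn (omega - 1) (n %/ gcdn r n)).
Proof.
move=> n0 cop; set k := gcdn (omega - 1) (n %/ gcdn r n).
set S := in_image_sigmaX n omega r.
have zn1 : (zeta n ^+ n = 1)%R := prim_expr_order (@zeta_prim n n0).
have conjS : forall z, S z -> S (z^*)%R.
  move=> _ [y <-]; exists (Ordinal (ltn_pmod (y * (n - 1)) n0)).
  rewrite /sigmaX rmorph_sum; apply: eq_bigr => x _.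
  rewrite /en; symmetry; transitivity ((zeta n ^+ (x * y))^*)%R; first by [].
  rewrite conj_zeta_pow //= -[RHS](expr_mod _ zn1) modnMmr (expr_mod _ zn1).
  by rewrite mulnA.
have rotS : forall z, S z -> S (zeta k * z)%R.
  by move=> _ [y <-]; have [y' H] := @rot n omega r y n0 cop; exists y'.
have k0 : 0 < k.
  rewrite gcdn_gt0 divn_gt0 ?gcdn_gt0 ?n0 ?orbT //.
  by rewrite (dvdn_leq n0 (dvdn_gcdr r n)) orbT.
have rotm : forall m z, S z -> S (zeta k ^+ m * z)%R.
  elim=> [|m IH] z Sz; first by rewrite expr0 mul1r.
  by rewrite exprS -mulrA; apply: rotS; apply: IH.
split => z; split.
- by move/conjS; rewrite conjCK.
- exact: conjS.
- move/(rotm k.-1); rewrite mulrA -exprSr prednK //.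
  by rewrite (prim_expr_order (@zeta_prim k k0)) mul1r.
- exact: rotS.
Qed.
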